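(* Assume $\ker(K)\cap\ker(D)=\{0\}$. Then for any $\delta\ge 0$ and any reconstructor $\Psi$, the function $\mathcal{J}_{\Psi,\delta}:\mathcal{X}\to\mathbb{R}$, $$\mathcal{J}_{\Psi,\delta}(x)=\|Kx-y^\delta\|_2^2+\lambda\,\|w(\Psi(y^\delta))\odot|Dx|\|_1,$$ is coercive.
   Context: Let $K\in\mathbb{R}^{m\times n}$ with $m\le n$, and let $D_h,D_v\in\mathbb{R}^{n\times n}$ be the discrete horizontal and vertical difference operators; $D:\mathbb{R}^n\to\mathbb{R}^{2n}$, $Dx=\begin{bmatrix}D_hx\\ D_vx\end{bmatrix}$, and $|Dx|\in\mathbb{R}^n$, $(|Dx|)_i=\sqrt{(D_hx)_i^2+(D_vx)_i^2}$. $\mathcal{X}=\{x\in\mathbb{R}^n: x_i\ge 0\ \forall i\}$. Fix $\lambda>0$, $\eta>0$, $p\in(0,1)$, and for $\tilde x\in\mathbb{R}^n$ define weights $(w(\tilde{x}))_i=\big(\eta/\sqrt{\eta^2+(|D\tilde{x}|)_i^2}\big)^{1-p}$. A reconstructor is a Lipschitz continuous map $\Psi:\mathbb{R}^m\to\mathbb{R}^n$. For $\delta\ge0$, $y^\delta\in\mathbb{R}^m$ denotes data $y^\delta=Kx^{GT}+e$ with $x^{GT}\in\mathcal{X}$ and $\|e\|_2\le\delta$. $\odot$ is the entrywise product. *)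

(* Defs.v *)
From HB Require Import structures.
From mathcomp Require Import all_boot all_order all_algebra.
From mathcomp Require Import all_classical all_reals.
From mathcomp Require Import exp.
Set Implicit Arguments. Unset Strict Implicit. Unset Printing Implicit Defensive.
Import Order.TTheory GRing.Theory Num.Theory.
Local Open Scope ring_scope.

Section Defs.
Variable R : realType.

Definition norm2 (k : nat) (v : 'cV[R]_k) : R :=
  Num.sqrt (\sum_(i < k) (v i 0) ^+ 2).

Definition norm1 (k : nat) (v : 'cV[R]_k) : R := \sum_(i < k) `|v i 0|.

(* Images of size n1 x n2 (n1 rows, n2 columns) are vectorized row-major:
   pixel (r, c) has index r * n2 + c.  Forward differences with zero
   (Neumann) boundary condition. *)
Definition Dh (n1 n2 : nat) : 'M[R]_(n1 * n2) :=
  \matrix_(i, j)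
    (if (nat_of_ord i %% n2 < n2.-1)%N then
       ((nat_of_ord j == (nat_of_ord i).+1)%:R - (nat_of_ord j == nat_of_ord i)%:R)
     else 0).

Definition Dv (n1 n2 : nat) : 'M[R]_(n1 * n2) :=
  \matrix_(i, j)
    (if (nat_of_ord i + n2 < n1 * n2)%N then
       ((nat_of_ord j == (nat_of_ord i + n2)%N)%:R - (nat_of_ord j == nat_of_ord i)%:R)
     else 0).

Definition absD (n1 n2 : nat) (x : 'cV[R]_(n1 * n2)) : 'cV[R]_(n1 * n2) :=
  \col_i Num.sqrt (((Dh n1 n2 *m x) i 0) ^+ 2 + ((Dv n1 n2 *m x) i 0) ^+ 2).

Definition weights (n1 n2 : nat) (eta p : R) (xt : 'cV[R]_(n1 * n2))
  : 'cV[R]_(n1 * n2) :=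
  \col_i ((eta / Num.sqrt (eta ^+ 2 + (absD xt i 0) ^+ 2)) `^ (1 - p)).

Definition hadamard (k : nat) (u v : 'cV[R]_k) : 'cV[R]_k :=
  \col_i (u i 0 * v i 0).

Definition nonneg (k : nat) (x : 'cV[R]_k) : Prop := forall i, 0 <= x i 0.

Definition lipschitz (a b : nat) (f : 'cV[R]_a -> 'cV[R]_b) : Prop :=
  exists L : R, forall y1 y2, norm2 (f y1 - f y2) <= L * norm2 (y1 - y2).

Definition coercive_on (k : nat) (X : 'cV[R]_k -> Prop) (J : 'cV[R]_k -> R)
  : Prop :=
  forall M : R, exists r : R, forall x, X x -> r < norm2 x -> M < J x.

Definition Jfun (m n1 n2 : nat) (K : 'M[R]_(m, n1 * n2)) (lam eta p : R)
  (Psi : 'cV[R]_m -> 'cV[R]_(n1 * n2)) (y : 'cV[R]_m) (x : 'cV[R]_(n1 * n2))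
  : R :=
  norm2 (K *m x - y) ^+ 2
  + lam * norm1 (hadamard (weights eta p (Psi y)) (absD x)).

End Defs.

(* Main.v *)
Require Import Defs.
From HB Require Import structures.
From mathcomp Require Import all_boot all_order all_algebra.
From mathcomp Require Import all_classical all_reals.
From mathcomp Require Import exp.
From mathcomp Require Import lra.
Import Order.TTheory GRing.Theory Num.Theory.
Local Open Scope ring_scope.

Section Helpers.
Set Implicit Arguments.
Context {R : realType}.

Lemma le_sum1 n (F : 'I_n -> R) i : (forall j, 0 <= F j) -> F i <= \sum_j F j.
Proof. by move=> H; rewrite (bigD1 i) //= ler_wpDr // sumr_ge0. Qed.

Lemma norm1_ge0 k (v : 'cV[R]_k) : 0 <= norm1 v.
Proof. by rewrite /norm1 sumr_ge0. Qed.

Lemma norm2_ge0 k (v : 'cV[R]_k) : 0 <= norm2 v.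
Proof. by rewrite /norm2 sqrtr_ge0. Qed.

Lemma abs_le_norm2 k (v : 'cV[R]_k) j : `|v j 0| <= norm2 v.
Proof.
rewrite -sqrtr_sqr /norm2 ler_sqrt; last by rewrite sumr_ge0 // => i _; exact: sqr_ge0.
by apply: (le_sum1 (fun i => v i 0 ^+ 2)) => i; exact: sqr_ge0.
Qed.

Lemma norm1_le_norm2 k (v : 'cV[R]_k) : norm1 v <= k%:R * norm2 v.
Proof.
rewrite /norm1 (@le_trans _ _ (\sum_(i < k) norm2 v)) //.
  by apply: ler_sum => i _; exact: abs_le_norm2.
by rewrite sumr_const card_ord mulr_natl.
Qed.

Lemma norm2_le_norm1 k (v : 'cV[R]_k) : norm2 v <= norm1 v.
Proof.
have -> : norm1 v = Num.sqrt (norm1 v ^+ 2) by rewrite sqrtr_sqr ger0_norm // norm1_ge0.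
rewrite /norm2 ler_sqrt ?sqr_ge0 //.
rewrite expr2 {2}/norm1 mulr_sumr.
apply: ler_sum => i _.
rewrite -(real_normK (num_real (v i 0))) expr2 mulrC ler_wpM2r //.
by apply: (le_sum1 (fun i => `|v i 0|)).
Qed.

Lemma norm1_add k (u v : 'cV[R]_k) : norm1 (u + v) <= norm1 u + norm1 v.
Proof.
rewrite /norm1 -big_split /=; apply: ler_sum => i _; rewrite mxE; exact: ler_normD.
Qed.

Lemma norm1_mul a b (P : 'M[R]_(a, b)) (v : 'cV[R]_b) :
  norm1 (P *m v) <= (\sum_i \sum_j `|P i j|) * norm1 v.
Proof.
rewrite /norm1 mulr_suml; apply: ler_sum => i _; rewrite mxE mulr_suml.
apply: (le_trans (ler_norm_sum _ _ _)); apply: ler_sum => j _.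
rewrite normrM ler_wpM2l //.
by apply: (le_sum1 (fun j => `|v j 0|)).
Qed.

Lemma sq_eq (k : nat) (v : 'cV[R]_k) : (v^T *m v) 0 0 = \sum_i v i 0 ^+ 2.
Proof. by rewrite mxE; apply: eq_bigr => i _; rewrite mxE expr2. Qed.

Lemma sq_ge0 (k : nat) (v : 'cV[R]_k) : 0 <= (v^T *m v) 0 0.
Proof. by rewrite sq_eq sumr_ge0 // => i _; exact: sqr_ge0. Qed.

Lemma sq0 (k : nat) (v : 'cV[R]_k) : (v^T *m v) 0 0 = 0 -> v = 0.
Proof.
rewrite sq_eq => /eqP; rewrite psumr_eq0 => [/allP H|i _]; last exact: sqr_ge0.
apply/matrixP => i j; rewrite (ord1 j) mxE.
by have /implyP/(_ isT) := H i (mem_index_enum _); rewrite sqrf_eq0 => /eqP.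
Qed.

Lemma gram_bound m n k1 k2 (K : 'M[R]_(m, n)) (A : 'M[R]_(k1, n)) (B : 'M[R]_(k2, n)) :
  (forall x : 'cV[R]_n, K *m x = 0 -> A *m x = 0 -> B *m x = 0 -> x = 0) ->
  exists C, 0 <= C /\ forall x,
    norm1 x <= C * (norm1 (K *m x) + norm1 (A *m x) + norm1 (B *m x)).
Proof.
move=> Hker.
pose G := K^T *m K + A^T *m A + B^T *m B.
have GT : G^T = G by rewrite /G !linearD /= !trmx_mul !trmxK.
have Gx (x : 'cV[R]_n) : G *m x = K^T *m (K *m x) + A^T *m (A *m x) + B^T *m (B *m x).
  by rewrite /G !mulmxDl !mulmxA.
have G0 (x : 'cV[R]_n) : G *m x = 0 -> x = 0.
  move=> Hx.
  have : (x^T *m (G *m x)) 0 0 = 0 by rewrite Hx mulmx0 mxE.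
  have T k (M : 'M[R]_(k, n)) : x^T *m (M^T *m (M *m x)) = (M *m x)^T *m (M *m x).
    by rewrite trmx_mul mulmxA.
  have h1 := sq_ge0 (K *m x); have h2 := sq_ge0 (A *m x); have h3 := sq_ge0 (B *m x).
  rewrite Gx !mulmxDr !T.
  move: h1 h2 h3.
  set a := (K *m x)^T *m (K *m x); set b := (A *m x)^T *m (A *m x).
  set c := (B *m x)^T *m (B *m x).
  rewrite !mxE => h1 h2 h3 E.
  by apply: Hker; apply: sq0; rewrite mxE; lra.
have uG : G \in unitmx.
  rewrite -row_free_unit -kermx_eq0; apply/eqP/row_matrixP => i.
  rewrite row0; set u := row i (kermx G).
  have : u *m G = 0 by apply/sub_kermxP; rewrite row_sub.
  move=> /(congr1 trmx); rewrite trmx_mul GT trmx0 => /G0 H.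
  by rewrite -(trmxK u) H trmx0.
pose P1 := invmx G *m K^T; pose P2 := invmx G *m A^T; pose P3 := invmx G *m B^T.
pose c1 := \sum_i \sum_j `|P1 i j|; pose c2 := \sum_i \sum_j `|P2 i j|.
pose c3 := \sum_i \sum_j `|P3 i j|.
have c1p : 0 <= c1 by rewrite sumr_ge0 // => i _; rewrite sumr_ge0.
have c2p : 0 <= c2 by rewrite sumr_ge0 // => i _; rewrite sumr_ge0.
have c3p : 0 <= c3 by rewrite sumr_ge0 // => i _; rewrite sumr_ge0.
exists (c1 + c2 + c3); split; first lra.
move=> x.
have E : invmx G *m (G *m x) = P1 *m (K *m x) + P2 *m (A *m x) + P3 *m (B *m x).
  by rewrite Gx !mulmxDr !mulmxA.
rewrite mulKmx // in E; rewrite {1}E.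
set a := K *m x; set b := A *m x; set c := B *m x.
have ha := norm1_ge0 a; have hb := norm1_ge0 b; have hc := norm1_ge0 c.
have e1 := norm1_mul P1 a; have e2 := norm1_mul P2 b; have e3 := norm1_mul P3 c.
have t1 := norm1_add (P1 *m a + P2 *m b) (P3 *m c).
have t2 := norm1_add (P1 *m a) (P2 *m b).
rewrite -/c1 -/c2 -/c3 in e1 e2 e3.
set u := P1 *m a + P2 *m b + P3 *m c.
nra.
Qed.

End Helpers.
Theorem lemma2 (R : realType) (m n1 n2 : nat) (K : 'M[R]_(m, n1 * n2))
  (lam eta p : R) :
  (m <= n1 * n2)%N ->
  0 < lam -> 0 < eta -> 0 < p -> p < 1 ->
  (forall x : 'cV[R]_(n1 * n2),
      K *m x = 0 -> @Dh R n1 n2 *m x = 0 -> @Dv R n1 n2 *m x = 0 -> x = 0) ->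
  forall (delta : R), 0 <= delta ->
  forall Psi : 'cV[R]_m -> 'cV[R]_(n1 * n2), lipschitz Psi ->
  forall (xGT : 'cV[R]_(n1 * n2)) (e : 'cV[R]_m),
    nonneg xGT -> norm2 e <= delta ->
    coercive_on (@nonneg R _) (Jfun K lam eta p Psi (K *m xGT + e)).
Proof.
move=> hm hlam heta hp0 hp1 Hker delta hd Psi HL xGT e Hx He M.
have [C [C0 HC]] := gram_bound Hker.
set y := K *m xGT + e.
set w := weights eta p (Psi y).
have wpos i : 0 < w i 0.
  rewrite /w /weights mxE; apply: powR_gt0; apply: divr_gt0 => //.
  rewrite sqrtr_gt0; apply: ltr_wpDr; first exact: sqr_ge0.
  exact: exprn_gt0.
pose W := \sum_i (w i 0)^-1.
have W0 : 0 <= W by rewrite sumr_ge0 // => i _; rewrite invr_ge0 ltW.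
pose H x := norm1 (hadamard w (absD x)).
have H0 x : 0 <= H x by exact: norm1_ge0.
have Hd x : \sum_i absD x i 0 <= W * H x.
  rewrite /H /norm1 mulr_sumr; apply: ler_sum => i _.
  rewrite /hadamard [X in `|X|]mxE.
  have d0 : 0 <= absD x i 0 by rewrite /absD mxE sqrtr_ge0.
  have wi := wpos i.
  rewrite ger0_norm; last by rewrite mulr_ge0 // ltW.
  rewrite -{1}(mulKf (lt0r_neq0 wi) (absD x i 0)).
  apply: ler_wpM2r; first by rewrite mulr_ge0 // ltW.
  by apply: (le_sum1 (fun i => (w i 0)^-1)) => j; rewrite invr_ge0 ltW.
have Dh_le x : norm1 (Dh R n1 n2 *m x) <= \sum_i absD x i 0.
  apply: ler_sum => i _; rewrite /absD [leRHS]mxE -sqrtr_sqr ler_sqrt; last first.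
    by rewrite addr_ge0 ?sqr_ge0.
  by apply: ler_wpDr; rewrite ?sqr_ge0.
have Dv_le x : norm1 (Dv R n1 n2 *m x) <= \sum_i absD x i 0.
  apply: ler_sum => i _; rewrite /absD [leRHS]mxE -sqrtr_sqr ler_sqrt; last first.
    by rewrite addr_ge0 ?sqr_ge0.
  by apply: ler_wpDl; rewrite ?sqr_ge0.
have Kb x : norm1 (K *m x) <= m%:R * norm2 (K *m x - y) + norm1 y.
  rewrite -{1}(subrK y (K *m x)); apply: (le_trans (norm1_add _ _)).
  by rewrite lerD2r norm1_le_norm2.
exists (C * (m%:R * (1 + `|M|) + norm1 y + 2 * (W * (`|M| / lam)))).
move=> x _ Hr; rewrite ltNge; apply/negP => HJ.
rewrite /Jfun -/w in HJ.
set t := norm2 (K *m x - y) in HJ Kb.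
have t0 : 0 <= t by exact: norm2_ge0.
have Hx0 := H0 x; rewrite /H in Hx0.
have MM : M <= `|M| by exact: ler_norm.
have lH : 0 <= lam * norm1 (hadamard w (absD x)) by rewrite mulr_ge0 // ltW.
have tb : t <= 1 + `|M|.
  have := sqr_ge0 (t - 1); rewrite sqrrB1 => ?; lra.
have Hb : H x <= `|M| / lam.
  rewrite ler_pdivlMr // /H mulrC; have := sqr_ge0 t; lra.
have m0 : 0 <= m%:R :> R by exact: ler0n.
have e1 : m%:R * t <= m%:R * (1 + `|M|) by exact: ler_wpM2l.
have e2 : W * H x <= W * (`|M| / lam) by exact: ler_wpM2l.
have e3 := Kb x; rewrite -/t in e3; have e4 := Dh_le x; have e5 := Dv_le x; have e6 := Hd x.
have e7 := HC x; have e8 := norm2_le_norm1 x.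
set Q := m%:R * (1 + `|M|) + norm1 y + 2 * (W * (`|M| / lam)) in Hr.
have e9 : norm1 (K *m x) + norm1 (Dh R n1 n2 *m x) + norm1 (Dv R n1 n2 *m x) <= Q.
  rewrite /Q; lra.
have e10 := ler_wpM2l C0 e9.
lra.
Qed.
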